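(* Let $G$ be an elementary abelian $3$-group, let $S$ be a maximal sum-free set in $G$, and let $x\in S$. Then (i) $x^{-1}S=S^{-1}S$; and (ii) $xS=S^{-1}=SS$.
   Context: A non-empty subset $S$ of a group $G$ is called sum-free if for all $s_1,s_2\in S$ (including the case $s_1=s_2$) one has $s_1s_2\notin S$. A maximal sum-free set in a finite group $G$ means a sum-free set of largest possible cardinality among all sum-free sets in $G$. Notation: $xS=\{xs: s\in S\}$, $x^{-1}S=\{x^{-1}s: s\in S\}$, $S^{-1}=\{s^{-1}: s\in S\}$, $SS=\{st: s,t\in S\}$, $S^{-1}S=\{s^{-1}t: s,t\in S\}$. *)

(* Defs.v *)
From mathcomp Require Import all_boot all_fingroup all_solvable.
Set Implicit Arguments. Unset Strict Implicit. Unset Printing Implicit Defensive.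
Local Open Scope group_scope.

Definition sum_free (gT : finGroupType) (G S : {set gT}) : bool :=
  [&& S \subset G, S != set0 &
      [forall s1 in S, forall s2 in S, s1 * s2 \notin S]].

Definition max_sum_free (gT : finGroupType) (G S : {set gT}) : bool :=
  sum_free G S && [forall T : {set gT}, sum_free G T ==> (#|T| <= #|S|)].

(* Main.v *)
Require Import Defs.
From mathcomp Require Import all_boot all_fingroup all_solvable.
Local Open Scope group_scope.

Lemma big_sf {gT : finGroupType} (G : {group gT}) :
  3.-abelem G -> G :!=: 1 -> exists T : {set gT}, sum_free G T && (#|G| <= 3 * #|T|).
Proof.
move=> hab ntG.
have pG := abelem_pgroup hab.
have [h|[M maxM _]] := maximal_exists (sub1G G).
  by rewrite -h eqxx in ntG.
have prM := maxgroupp maxM.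
have sMG := proper_sub prM.
have iM := p_maximal_index pG maxM.
case/properP: prM => _ [a aG aM].
exists (a *: M); apply/andP; split.
  apply/and3P; split.
  - apply/subsetP => y /lcosetP [m mM ->]; rewrite groupM //; exact: (subsetP sMG).
  - apply/set0Pn; exists a; apply/lcosetP; exists 1; rewrite ?mulg1 //.
  - apply/forall_inP => y1 /lcosetP [m1 m1M ->]; apply/forall_inP => y2 /lcosetP [m2 m2M ->].
    rewrite mem_lcoset mulgA mulKg groupMl //; apply/negP => h.
    by move: h; rewrite groupMr // (negbTE aM).
rewrite card_lcoset -(Lagrange sMG) iM mulnC.
by [].
Qed.

Theorem proposition1 (gT : finGroupType) (G : {group gT}) (S : {set gT}) (x : gT) :
  3.-abelem G -> max_sum_free G S -> x \in S ->
  (x^-1 *: S = S^-1 * S) /\ (x *: S = S^-1 /\ S^-1 = S * S).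
Proof.
move=> hab /andP [sfS /forall_inP maxS] xS.
case/and3P: sfS => sSG S0 /forall_inP sf'.
have sf : forall a b, a \in S -> b \in S -> a * b \notin S.
  by move=> a b aS bS; exact: (forall_inP (sf' a aS) b bS).
have [abG e3] := abelemP (isT : prime 3) hab.
have inG : forall a, a \in S -> a \in G by move=> a; apply: (subsetP sSG).
have comm : forall a b, a \in G -> b \in G -> a * b = b * a.
  by move=> a b aG bG; apply: (centsP abG).
have inv2 : forall a, a \in G -> a^-1 = a * a.
  move=> a aG; apply/eqP; rewrite eq_invg_mul; apply/eqP.
  by rewrite -(e3 a aG) expgS expgS expg1.
have hbig : #|G| <= 3 * #|S|.
  have [G1|ntG] := eqVneq G 1%G.
    move: S0 => /set0Pn [s sS]; rewrite G1 cards1.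
    by rewrite (cardD1 s) sS.
  have [T /andP [sfT le]] := big_sf _ hab ntG.
  by apply: (leq_trans le); rewrite leq_mul2l (maxS T).
have disj : forall A B : {set gT}, (forall z, z \in A -> z \notin B) ->
    #|A :|: B| = #|A| + #|B|.
  move=> A B h; rewrite -cardsUI.
  suff -> : A :&: B = set0 by rewrite cards0 addn0.
  apply/setP => z; rewrite !inE; apply/negP => /andP [zA zB].
  by move: (h z zA); rewrite zB.
have part : forall y, y \in S -> forall z, z \in G -> z \notin S ->
    z \notin y^-1 *: S -> z \in y *: S.
  move=> y yS z zG zS zy.
  pose U := S :|: y *: S :|: y^-1 *: S.
  have UG : U \subset G.
    apply/subsetP => w; rewrite !inE => /orP [/orP [wS|]|].
    - exact: inG.
    - rewrite mem_lcoset => /inG h; rewrite -(mulKVg y w) groupM //; exact: inG.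
    - rewrite mem_lcoset invgK => /inG h; rewrite -(mulKg y w) groupM ?groupV //; exact: inG.
  have d1 : forall w, w \in S -> w \notin y *: S.
    move=> w wS; rewrite mem_lcoset; apply/negP => h.
    by move: (sf _ _ yS h); rewrite mulKVg wS.
  have d2 : forall w, w \in S :|: y *: S -> w \notin y^-1 *: S.
    move=> w; rewrite inE !mem_lcoset invgK => /orP [wS|].
    + exact: sf.
    + move=> tS; apply/negP => h.
      have e : y * w = y^-1 * (y^-1 * w).
        by rewrite mulgA; congr (_ * w); rewrite {2}(inv2 y (inG y yS)) mulKg.
      move: h; rewrite e => h.
      by move: (sf _ _ yS h); rewrite mulKVg tS.
  have cU : #|U| = (3 * #|S|)%N.
    rewrite /U (disj _ _ d2) (disj _ _ d1) !card_lcoset.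
    by rewrite mulSn mul2n -addnn addnA.
  have UeG : U = G by apply/eqP; rewrite eqEcard UG cU hbig.
  move: zG; rewrite -UeG !inE (negbTE zS) (negbTE zy) orbF; by [].
have part' : forall y, y \in S -> forall z, z \in G -> z \notin S ->
    z \notin y *: S -> z \in y^-1 *: S.
  move=> y yS z zG zS zy; apply/negPn/negP => h.
  by move: (part y yS z zG zS h); rewrite (negbTE zy).
have xSinv : forall y, y \in S -> y *: S = S^-1.
  move=> y yS; apply/eqP; rewrite eq_sym eqEcard card_invg card_lcoset leqnn andbT.
  apply/subsetP => w; rewrite mem_invg => wS.
  have wG : w \in G by rewrite -(invgK w) groupV; exact: inG.
  apply: (part y yS w wG).
  - apply/negP => h; move: (sf _ _ wS wS).
    by rewrite -(inv2 _ (inG _ wS)) invgK h.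
  - rewrite mem_lcoset invgK; apply/negP => h; move: (sf _ _ wS h).
    by rewrite (comm y w) ?mulKg ?yS //; exact: inG.
split.
  apply/eqP; rewrite eqEsubset; apply/andP; split.
    apply/subsetP => w /lcosetP [s sS ->]; apply: mem_mulg => //.
    by rewrite mem_invg invgK.
  apply/subsetP => w /mulsgP [a b aSi bS ->].
  move: aSi; rewrite mem_invg => cS.
  have aG : a \in G by rewrite -(invgK a) groupV; exact: inG.
  apply: (part' x xS).
  - by rewrite groupM //; exact: inG.
  - apply/negP => h; move: (sf _ _ cS h); by rewrite mulKg bS.
  - rewrite (xSinv x xS) mem_invg invMg; apply/negP => h.
    move: (sf _ _ bS h); by rewrite mulKVg cS.
split; first exact: xSinv.
apply/eqP; rewrite eqEsubset; apply/andP; split.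
  apply/subsetP => w; rewrite mem_invg => wS.
  rewrite -(invgK w) (inv2 _ (inG _ wS)); exact: mem_mulg.
apply/subsetP => w /mulsgP [a b aS bS ->].
by rewrite -(xSinv a aS) mem_lcoset mulKg.
Qed.
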